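(* Let $(X,\to)$ be a transition system over $A$. For every congruence $R\subseteq\mathcal P(X)\times\mathcal P(X)$ and $X_1,X_2\subseteq X$: $(X_1,X_2)\in\beta_t(R)$ iff ($X_1=\emptyset\iff X_2=\emptyset$) and $\delta_a[X_1]\mathrel R\delta_a[X_2]$ for all $a\in A$. The restriction of $\beta_t$ to congruences is continuous, independent of the branching type of the transition system.
   Context: $\delta_a[Y]=\{x'\mid\exists y\in Y\colon y\xrightarrow{a}x'\}$; $\Diamond_a(S)=\{x\mid\exists x'\in S\colon x\xrightarrow{a}x'\}$. A congruence is an equivalence $R$ on $\mathcal P(X)$ with $X_i\mathrel RY_i$ ($i\in I$) implying $\bigcup_iX_i\mathrel R\bigcup_iY_i$. $\alpha_t(\mathcal S)=\{(X_1,X_2)\mid\forall S\in\mathcal S\colon(X_1\cap S\neq\emptyset\iff X_2\cap S\neq\emptyset)\}$, $\gamma_t(R)=\{S\subseteq X\mid\forall(X_1,X_2)\in R\colon(X_1\cap S\neq\emptyset\iff X_2\cap S\neq\emptyset)\}$, $\mathit{lo}_t(\mathcal S)=\bigcup_{a\in A}\{\Diamond_a(S)\mid S\in\mathcal S\}\cup\{X\}$, $\beta_t=\alpha_t\circ\mathit{lo}_t\circ\gamma_t$ on the lattice $(\mathit{Eq}(\mathcal P(X)),\supseteq)$ of equivalences on $\mathcal P(X)$; continuity means preservation of suprema (in this order, intersections) of well-ordered chains. *)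

(* Defs.v *)
Section Defs.
Context {X A : Type} (step : X -> A -> X -> Prop).

Definition pset := X -> Prop.
Definition prel := pset -> pset -> Prop.

Definition delta (a : A) (Y : pset) : pset :=
  fun x' => exists y, Y y /\ step y a x'.

Definition diamond (a : A) (S : pset) : pset :=
  fun x => exists x', S x' /\ step x a x'.

Definition meets (Y S : pset) : Prop := exists x, Y x /\ S x.

Definition is_equiv (R : prel) : Prop :=
  (forall Y, R Y Y) /\ (forall Y Z, R Y Z -> R Z Y) /\
  (forall Y Z W, R Y Z -> R Z W -> R Y W).

Definition congruence (R : prel) : Prop :=
  is_equiv R /\
  forall (I : Type) (F G : I -> pset), (forall i, R (F i) (G i)) ->
    R (fun x => exists i, F i x) (fun x => exists i, G i x).

Definition alpha_t (SS : pset -> Prop) : prel :=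
  fun X1 X2 => forall S, SS S -> (meets X1 S <-> meets X2 S).

Definition gamma_t (R : prel) : pset -> Prop :=
  fun S => forall X1 X2, R X1 X2 -> (meets X1 S <-> meets X2 S).

(* lo_t(SS) = { Diamond_a(S) | a in A, S in SS } \cup { X }
   (membership stated up to extensional equality of subsets) *)
Definition lo_t (SS : pset -> Prop) : pset -> Prop :=
  fun T => (exists a S, SS S /\ forall x, T x <-> diamond a S x)
           \/ (forall x, T x).

Definition beta_t (R : prel) : prel := alpha_t (lo_t (gamma_t R)).

(* intersection of a family of relations (supremum in (Eq(P(X)), ⊇)) *)
Definition rel_inter (C : prel -> Prop) : prel :=
  fun X1 X2 => forall R, C R -> R X1 X2.

(* C is a nonempty well-ordered chain of congruences in (Eq(P(X)), ⊇):
   every nonempty subfamily has a least element w.r.t. ⊇,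
   i.e. a member containing all other members. *)
Definition wo_chain_of_congruences (C : prel -> Prop) : Prop :=
  (exists R, C R) /\
  (forall R, C R -> congruence R) /\
  (forall R S, C R -> C S ->
     (forall Y Z, R Y Z -> S Y Z) \/ (forall Y Z, S Y Z -> R Y Z)) /\
  (forall D : prel -> Prop, (forall R, D R -> C R) -> (exists R, D R) ->
     exists R, D R /\ forall S, D S -> forall Y Z, S Y Z -> R Y Z).

End Defs.

(* Main.v *)
Require Import Defs.
From Stdlib Require Import Classical FunctionalExtensionality PropExtensionality.

Section H.
Context {X : Type}.

Lemma pset_ext (Y Y' : @pset X) : (forall x, Y x <-> Y' x) -> Y = Y'.
Proof. intro H; apply functional_extensionality; intro x; apply propositional_extensionality; auto. Qed.

Lemma R_ext (R : @prel X) Y Z Y' Z' : R Y Z -> (forall x, Y x <-> Y' x) -> (forall x, Z x <-> Z' x) -> R Y' Z'.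
Proof. intros H h1 h2. rewrite <- (pset_ext _ _ h1), <- (pset_ext _ _ h2). exact H. Qed.

Lemma union2 (R : @prel X) Y1 Z1 Y2 Z2 : congruence R -> R Y1 Z1 -> R Y2 Z2 ->
  R (fun x => Y1 x \/ Y2 x) (fun x => Z1 x \/ Z2 x).
Proof.
  intros [_ HU] h1 h2.
  pose proof (HU bool (fun b => if b then Y1 else Y2) (fun b => if b then Z1 else Z2)) as H.
  eapply R_ext. apply H. intros [|]; assumption.
  - intro x; split. intros [[|] h]; auto. intros [h|h]; [exists true|exists false]; auto.
  - intro x; split. intros [[|] h]; auto. intros [h|h]; [exists true|exists false]; auto.
Qed.

Lemma ag_half (R : @prel X) Y Z : congruence R -> alpha_t (gamma_t R) Y Z ->
  R (fun x => Y x \/ Z x) Y.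
Proof.
  intros HC Hag. pose proof HC as [[Hr [Hs Ht]] HU].
  set (U := fun x => exists W, R W Y /\ W x).
  assert (RU : R U Y).
  { pose proof (HU {W | R W Y} (fun i => proj1_sig i) (fun _ => Y)) as H.
    eapply R_ext. apply H. intros [W hW]; exact hW.
    - intro x; split. intros [[W hW] h]; exists W; auto. intros [W [hW h]]; exists (exist _ W hW); auto.
    - intro x; split. intros [_ h]; auto. intro h; exists (exist (fun W => R W Y) Y (Hr Y)); auto. }
  assert (key : forall X1 X2, R X1 X2 -> (forall x, X1 x -> U x) -> forall x, X2 x -> U x).
  { intros X1 X2 H12 sub x hx.
    assert (H' : R (fun x => X1 x \/ U x) (fun x => X2 x \/ U x)) by (apply union2; auto).
    assert (H2 : R U (fun x => X2 x \/ U x)).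
    { eapply R_ext. exact H'. intro y; split; [intros [h|h]; auto|auto]. intro y; tauto. }
    exists (fun x => X2 x \/ U x). split; auto. eapply Ht. apply Hs. exact H2. exact RU. }
  set (S := fun x => ~ U x).
  assert (gS : gamma_t R S).
  { intros X1 X2 H12.
    assert (h : forall X1 X2, R X1 X2 -> meets X1 S -> meets X2 S).
    { intros P Q HPQ hm. apply NNPP; intro hn.
      assert (sub : forall x, Q x -> U x).
      { intros x hx. apply NNPP; intro hu. apply hn. exists x; split; auto. }
      destruct hm as [x [hx hs]]. apply hs. eapply key. apply Hs; exact HPQ. exact sub. exact hx. }
    split; apply h; auto. }
  assert (ZU : forall x, Z x -> U x).
  { intros x hx. apply NNPP; intro hu.
    assert (meets Y S) as [y [hy hs]].
    { apply (proj2 (Hag S gS)). exists x. auto. }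
    apply hs. exists Y; auto. }
  assert (H1 : R (fun x => Y x \/ Z x) (fun x => U x \/ Z x)) by (apply union2; auto).
  apply (Ht _ U). eapply R_ext. exact H1. intro; tauto.
  intro x; specialize (ZU x); simpl; tauto. exact RU.
Qed.

Lemma ag_R (R : @prel X) Y Z : congruence R -> alpha_t (gamma_t R) Y Z -> R Y Z.
Proof.
  intros HC Hag. pose proof HC as [[Hr [Hs Ht]] HU].
  assert (Hag' : alpha_t (gamma_t R) Z Y).
  { intros S hS. symmetry. apply Hag; auto. }
  pose proof (ag_half R Y Z HC Hag) as h1.
  pose proof (ag_half R Z Y HC Hag') as h2.
  eapply Ht. apply Hs. exact h1. eapply R_ext. exact h2. intro; tauto. intro; tauto.
Qed.

End H.

Lemma part1 (X A : Type) (step : X -> A -> X -> Prop) :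
  forall R : prel, congruence R ->
     forall X1 X2 : pset,
       beta_t step R X1 X2 <->
       (((forall x, ~ X1 x) <-> (forall x, ~ X2 x)) /\
        forall a : A, R (delta step a X1) (delta step a X2)).
Proof.
  intros R HC X1 X2.
  assert (dm : forall Y a S, meets Y (diamond step a S) <-> meets (delta step a Y) S).
  { intros Y a S; split.
    - intros [x [hx [x' [hs st]]]]. exists x'. split; auto. exists x; auto.
    - intros [x' [[x [hx st]] hs]]. exists x. split; auto. exists x'; auto. }
  split.
  - intro Hb. split.
    + assert (h := Hb (fun _ => True) (or_intror (fun _ => I))).
      split; intros H x hx.
      * destruct (proj2 h (ex_intro _ x (conj hx I))) as [y [hy _]]. exact (H y hy).
      * destruct (proj1 h (ex_intro _ x (conj hx I))) as [y [hy _]]. exact (H y hy).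
    + intro a. apply ag_R; auto. intros S hS.
      rewrite <- !dm. apply Hb. left. exists a, S. split; auto. intro; tauto.
  - intros [He Ha] T [[a [S [hS hT]]] | hT].
    + rewrite (pset_ext _ _ hT). rewrite !dm. apply hS. apply Ha.
    + split; intro hm; apply NNPP; intro hn.
      * destruct hm as [x [hx _]]. exact (proj2 He (fun y hy => hn (ex_intro _ y (conj hy (hT y)))) x hx).
      * destruct hm as [x [hx _]]. exact (proj1 He (fun y hy => hn (ex_intro _ y (conj hy (hT y)))) x hx).
Qed.

Theorem mainTheorem12 (X A : Type) (step : X -> A -> X -> Prop) :
  (forall R : prel, congruence R ->
     forall X1 X2 : pset,
       beta_t step R X1 X2 <->
       (((forall x, ~ X1 x) <-> (forall x, ~ X2 x)) /\
        forall a : A, R (delta step a X1) (delta step a X2)))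
  /\
  (forall C : prel -> Prop, wo_chain_of_congruences C ->
     forall X1 X2 : pset,
       beta_t step (rel_inter C) X1 X2 <->
       (forall R, C R -> beta_t step R X1 X2)).
Proof.
  split. apply part1.
  intros C [[R0 HR0] [Hcong _]] X1 X2.
  assert (HCi : congruence (rel_inter C)).
  { split. split; [|split].
    - intros Y R hR. destruct (Hcong R hR) as [[h1 [h2 h3]] h4]. apply h1.
    - intros Y Z h R hR. destruct (Hcong R hR) as [[h1 [h2 h3]] h4]. apply h2, h; auto.
    - intros Y Z W g1 g2 R hR. destruct (Hcong R hR) as [[h1 [h2 h3]] h4]. apply (h3 _ Z). apply g1; auto. apply g2; auto.
    - intros I F G h R hR. destruct (Hcong R hR) as [[h1 [h2 h3]] h4]. apply h4. intro i. apply h; auto. }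
  rewrite part1 by exact HCi. split.
  - intros [He Ha] R hR. apply part1; auto. split; auto. intro a; apply Ha; auto.
  - intro H. split.
    + apply (part1 X A step R0 (Hcong R0 HR0)). apply H; auto.
    + intros a R hR. apply (part1 X A step R (Hcong R hR)). apply H; auto.
Qed.
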